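(* Fix $k\in\mathbb{N}$, $q\in(0,1)$, $s=q^{-1/2}$ and $u>s$. There is a constant $\tilde C$ depending on $k,q,u$ such that for every $\lambda\in\mathsf{Sign}_k^+$ and every $\pi\in\mathcal{P}_{\lambda/\varnothing}$, $$|\mathcal{W}(\pi)|\le\tilde C\left(\frac{u-s}{su-1}\right)^{|\lambda|},$$ where $|\lambda|=\lambda_1+\dots+\lambda_k$.
   Context: $\mathsf{Sign}_k^+$ is the set of $\lambda=(\lambda_1\ge\dots\ge\lambda_k)$ with $\lambda_i\in\mathbb{Z}_{\ge0}$. A vertex has type $(i_1,j_1;i_2,j_2)$ if $i_1$ (resp. $j_1$) paths enter from below (resp. the left) and $i_2$ (resp. $j_2$) leave upward (resp. right). Weights with spectral parameter $z$ ($g\in\mathbb{Z}_{\ge0}$; all other types weight $0$): $w_z(g,0;g,0)=\frac{1-sq^gz}{1-sz}$, $w_z(g+1,0;g,1)=\frac{(1-s^2q^g)z}{1-sz}$, $w_z(g,1;g,1)=\frac{z-sq^g}{1-sz}$, $w_z(g,1;g+1,0)=\frac{1-q^{g+1}}{1-sz}$. For $\lambda\in\mathsf{Sign}_k^+$, $\mathcal{P}_{\lambda/\varnothing}$ is the set of collections of up-right paths in $\mathbb{Z}_{\ge0}\times\{1,\dots,k\}$ with at most one path per horizontal edge (vertical edges may carry several), one path entering through $(-1,y)\to(0,y)$ for each $y=1,\dots,k$, none entering from the bottom, and paths exiting at the top through $(\lambda_i,k)\to(\lambda_i,k+1)$, $i=1,\dots,k$ (with multiplicity). For such $\pi$, $\mathcal{W}(\pi)=\prod_{(x,y)}w_u(\text{type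 of }(x,y))$ (all spectral parameters equal to $u$). *)

(* Defs.v *)
From HB Require Import structures.
From mathcomp Require Import all_boot all_order all_algebra.
From mathcomp Require Import reals.
Set Implicit Arguments. Unset Strict Implicit. Unset Printing Implicit Defensive.
Import Order.TTheory GRing.Theory Num.Theory.
Local Open Scope ring_scope.

(* Vertex weight w_z(i1,j1;i2,j2): i1 paths from below, j1 from the left,
   i2 leave upward, j2 leave to the right. *)
Definition vweight {R : realType} (s q z : R) (i1 j1 i2 j2 : nat) : R :=
  match j1, j2 with
  | 0%N, 0%N => if i1 == i2 then (1 - s * q ^+ i1 * z) / (1 - s * z) else 0
  | 0%N, 1%N => if i1 == i2.+1 then (1 - s ^+ 2 * q ^+ i2) * z / (1 - s * z) else 0
  | 1%N, 1%N => if i1 == i2 then (z - s * q ^+ i1) / (1 - s * z) else 0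
  | 1%N, 0%N => if i2 == i1.+1 then (1 - q ^+ i2) / (1 - s * z) else 0
  | _, _ => 0
  end.

Definition is_signature (k : nat) (lam : 'I_k -> nat) : Prop :=
  forall i j : 'I_k, (i <= j)%N -> (lam j <= lam i)%N.

Definition sig_size (k : nat) (lam : 'I_k -> nat) : nat := (\sum_(i < k) lam i)%N.

Definition sig_mult (k : nat) (lam : 'I_k -> nat) (x : nat) : nat :=
  #|[pred i : 'I_k | lam i == x]|.

(* A path collection in P_{lam/empty} encoded by its edge occupation numbers:
   h x y = number of paths on the horizontal edge (x-1,y) -> (x,y)
           (so h 0 y is the edge (-1,y) -> (0,y)),
   v x y = number of paths on the vertical edge (x,y-1) -> (x,y). *)
Definition is_path_config (k : nat) (lam : 'I_k -> nat)
    (h v : nat -> nat -> nat) : Prop :=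
  [/\ (forall y, (1 <= y <= k)%N -> h 0%N y = 1%N),
      (forall x y, (1 <= y <= k)%N -> (h x y <= 1)%N),
      (forall x, v x 1%N = 0%N),
      (forall x, v x k.+1 = sig_mult lam x) &
      (forall x y, (1 <= y <= k)%N -> (h x y + v x y = h x.+1 y + v x y.+1)%N)].

(* Weight W(pi): product over all vertices (x,y), x >= 0, 1 <= y <= k.
   Vertices with x > lam_1 carry no path (flow conservation), hence weight 1,
   so the product is taken over x <= max_i lam_i. *)
Definition config_weight {R : realType} (s q z : R) (k : nat) (lam : 'I_k -> nat)
    (h v : nat -> nat -> nat) : R :=
  \prod_(x < (\max_(i < k) lam i).+1)
    \prod_(1 <= y < k.+1) vweight s q z (v x y) (h x y) (v x y.+1) (h x.+1 y).

(* Main.v *)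
Require Import Defs.
From HB Require Import structures.
From mathcomp Require Import all_boot all_order all_algebra.
From mathcomp Require Import reals.
From mathcomp Require Import zify ring lra.
Import Order.TTheory GRing.Theory Num.Theory.
Set Implicit Arguments. Unset Strict Implicit.

Lemma rowsum (k : nat) (h v : nat -> nat -> nat)
  (Hc : forall x y, (1 <= y <= k)%N -> (h x y + v x y = h x.+1 y + v x y.+1)%N)
  (H1 : forall x, v x 1%N = 0%N) x j : (j <= k)%N ->
  (\sum_(1 <= y < j.+1) h x y = \sum_(1 <= y < j.+1) h x.+1 y + v x j.+1)%N.
Proof.
elim: j => [|j IH] Hj.
  by rewrite !big_geq // H1.
rewrite !(big_nat_recr j.+1) //= IH ?(ltnW Hj) //.
have := Hc x j.+1; rewrite Hj /= => E; lia.
Qed.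

Lemma coltel (k : nat) (h v : nat -> nat -> nat)
  (Hc : forall x y, (1 <= y <= k)%N -> (h x y + v x y = h x.+1 y + v x y.+1)%N)
  (H1 : forall x, v x 1%N = 0%N) n j : (j <= k)%N ->
  (\sum_(1 <= y < j.+1) h 0 y = \sum_(1 <= y < j.+1) h n y + \sum_(x < n) v x j.+1)%N.
Proof.
move=> Hj; elim: n => [|n IH]; first by rewrite big_ord0 addn0.
rewrite big_ord_recr /= IH (rowsum Hc H1 n Hj) -!addnA; congr (_ + _); exact: addnC.
Qed.

Lemma h0sum (k : nat) (h : nat -> nat -> nat)
  (H0 : forall y, (1 <= y <= k)%N -> h 0 y = 1%N) j : (j <= k)%N ->
  (\sum_(1 <= y < j.+1) h 0 y = j)%N.
Proof.
elim: j => [|j IH] Hj; first by rewrite big_geq.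
rewrite (big_nat_recr j.+1) //= IH ?(ltnW Hj) // H0 ?Hj //. lia.
Qed.

Lemma vsum_bound (k : nat) (h v : nat -> nat -> nat)
  (H0 : forall y, (1 <= y <= k)%N -> h 0 y = 1%N)
  (Hc : forall x y, (1 <= y <= k)%N -> (h x y + v x y = h x.+1 y + v x y.+1)%N)
  (H1 : forall x, v x 1%N = 0%N) n j : (j <= k)%N ->
  (\sum_(x < n) v x j.+1 <= k)%N.
Proof.
move=> Hj; have := coltel Hc H1 n Hj; rewrite (h0sum H0 Hj) => E. lia.
Qed.

Lemma sum_lt (n a : nat) : (\sum_(x < n) (x < a) = minn a n)%N.
Proof.
elim: n => [|n IH]; first by rewrite big_ord0 minn0.
rewrite big_ord_recr /= IH; case: ltnP => H /=; lia.
Qed.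

Lemma multE k (lam : 'I_k -> nat) x :
  sig_mult lam x = (\sum_(i < k) (lam i == x))%N.
Proof.
rewrite /sig_mult -sum1_card big_mkcond /=; apply: eq_bigr => i _.
by rewrite inE; case: (lam i == x).
Qed.

Lemma Hform (k : nat) (lam : 'I_k -> nat) (h v : nat -> nat -> nat) :
  is_path_config lam h v -> forall x,
  (\sum_(1 <= y < k.+1) h x y = \sum_(i < k) (x <= lam i))%N.
Proof.
case=> H0 _ H1 Hk Hc; elim=> [|x IH].
  rewrite (h0sum H0 (leqnn k)); under eq_bigr => i _ do rewrite leq0n.
  by rewrite sum_nat_const card_ord muln1.
have := rowsum Hc H1 x (leqnn k); rewrite IH Hk multE => E.
have E2 : (\sum_(i < k) (x <= lam i) = \sum_(i < k) (x < lam i) + \sum_(i < k) (lam i == x))%N.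
  rewrite -big_split /=; apply: eq_bigr => i _.
  by case: (ltngtP x (lam i)).
rewrite E2 in E; symmetry; exact: (addIn E).
Qed.

Lemma hsum_total (k : nat) (lam : 'I_k -> nat) (h v : nat -> nat -> nat) :
  is_path_config lam h v ->
  (\sum_(x < (\max_(i < k) lam i).+1) \sum_(1 <= y < k.+1) h x.+1 y = sig_size lam)%N.
Proof.
move=> Hp; under eq_bigr => x _ do rewrite (Hform Hp x.+1).
rewrite exchange_big /sig_size; apply: eq_bigr => i _.
rewrite sum_lt; apply/minn_idPl. exact: leqW (leq_bigmax _).
Qed.

Lemma vsum_total (k : nat) (lam : 'I_k -> nat) (h v : nat -> nat -> nat) n :
  is_path_config lam h v ->
  (\sum_(x < n) \sum_(1 <= y < k.+1) (v x y + v x y.+1) <= k * (k + k))%N.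
Proof.
case=> H0 _ H1 _ Hc.
rewrite exchange_big /= big_seq.
apply: leq_trans (_ : \sum_(y <- index_iota 1 k.+1 | y \in index_iota 1 k.+1) (k + k) <= _)%N.
  apply: leq_sum => y; rewrite mem_index_iota => /andP [Hy1 Hy2].
  rewrite big_split /=; apply: leq_add.
    case: y Hy1 Hy2 => // y _ Hy; apply: (vsum_bound H0 Hc H1); lia.
  by apply: (vsum_bound H0 Hc H1); rewrite -ltnS.
by rewrite -big_seq sum_nat_const_nat subn1.
Qed.

Local Open Scope ring_scope.

Section V.
Variables (R : realType) (s q z : R).
Hypotheses (q0 : 0 < q) (q1 : q <= 1) (s1 : 1 < s) (sz : s < z).

Ltac prep := have ? := q0; have ? := q1; have ? := s1; have ? := sz.

Local Definition D := s * z - 1.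
Local Definition N := 2 + s + 2 * z + s * z + s ^+ 2 * z.
Local Definition r := (z - s) / D.
Local Definition B0 := N / D.
Local Definition B := 1 + B0 / r.

Lemma D_gt0 : 0 < D.
Proof. prep. have h1 : 0 < s - 1 by lra. have h2 : 0 < z - 1 by lra.
have := mulr_gt0 h1 h2. rewrite /D; nra. Qed.
Lemma r_gt0 : 0 < r. Proof. prep. rewrite /r divr_gt0 ?D_gt0 //; lra. Qed.
Lemma r_le1 : r <= 1.
Proof. prep. rewrite /r ler_pdivrMr ?D_gt0 // mul1r /D; nra. Qed.
Lemma N_ge0 : 0 <= N. Proof. prep. rewrite /N; nra. Qed.
Lemma B_ge1 : 1 <= B.
Proof. prep. rewrite /B lerDl divr_ge0 // ?(ltW r_gt0) // /B0 divr_ge0 ?N_ge0 // ltW // D_gt0. by []. Qed.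

Lemma divD X : `|X| <= N -> `|X / (1 - s * z)| <= B0.
Proof. prep.
have hD : 1 - s * z < 0 by have := D_gt0; rewrite /D => ?; lra.
move=> HX; rewrite normrM normfV (ltr0_norm hD).
rewrite /B0 opprB -/D ler_pM2r ?invr_gt0 ?D_gt0 //.
Qed.

Lemma wB0 a b c d : `|vweight s q z a b c d| <= B0.
Proof. prep.
have hp : forall g, 0 < q ^+ g <= 1.
  by move=> g; rewrite exprn_gt0 // exprn_ile1 // ltW.
have B0p : 0 <= B0 by rewrite /B0 divr_ge0 ?N_ge0 // ltW // D_gt0.
have z0 : 0 < z by lra.
have s0 : 0 < s by lra.
have s2 : 0 < s ^+ 2 by rewrite exprn_gt0.
have sz0 : 0 <= s * z by rewrite mulr_ge0 // ltW.
have s2z : 0 <= s ^+ 2 * z by rewrite mulr_ge0 // ltW.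
rewrite /vweight; case: b => [|[|b]]; case: d => [|[|d]];
  rewrite ?normr0 //; case: ifP => _; rewrite ?mul0r ?normr0 //; apply: divD;
  rewrite ler_norml; rewrite /N.
- have /andP[h1 h2] := hp a.
  have : s * q ^+ a * z <= s * z by rewrite ler_pM2r // ler_piMr // ltW.
  have : 0 <= s * q ^+ a * z by rewrite !mulr_ge0 // ltW.
  move=> ? ?; lra.
- have /andP[h1 h2] := hp c.
  have : s ^+ 2 * q ^+ c <= s ^+ 2 by rewrite ler_piMr // ltW.
  have : 0 <= s ^+ 2 * q ^+ c by rewrite mulr_ge0 // ltW.
  move=> H1 H2. rewrite mulrBl mul1r.
  have : s ^+ 2 * q ^+ c * z <= s ^+ 2 * z by rewrite ler_pM2r.
  have : 0 <= s ^+ 2 * q ^+ c * z by rewrite mulr_ge0 // ltW.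
  move=> ? ?; lra.
- have /andP[h1 h2] := hp c.
  lra.
- have /andP[h1 h2] := hp a.
  have : s * q ^+ a <= s by rewrite ler_piMr // ltW.
  have : 0 <= s * q ^+ a by rewrite mulr_ge0 // ltW.
  move=> ? ?; lra.
Qed.

Lemma wbound a b c d : `|vweight s q z a b c d| <= B ^+ (a + c) * r ^+ d.
Proof. prep.
have rp := r_gt0; have r1 := r_le1; have Bp := B_ge1.
have H1 : B0 <= B * r by rewrite /B mulrDl mul1r divfK ?gt_eqF // lerDr ltW.
have H2 : forall n, B <= B ^+ n.+1.
  by move=> n; rewrite exprS ler_peMr //; [lra| exact: exprn_ege1].
have H3 : forall n d', (d' <= 1)%N -> B0 <= B ^+ n.+1 * r ^+ d'.
  move=> n [|[|d']] // _; apply: (le_trans H1).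
    by rewrite expr0 mulr1; apply: le_trans (H2 n); rewrite ler_piMr //; lra.
  by rewrite expr1 ler_pM2r //.
case: d => [|[|d]]; last first.
  have -> : vweight s q z a b c d.+2 = 0 by case: b => [|[|b]].
  by rewrite normr0 mulr_ge0 // exprn_ge0 // ltW //; lra.
- case: a => [|a]; case: c => [|c].
  + rewrite /vweight expr0 mul1r expr1; case: b => [|[|b]] /=; rewrite ?normr0 ?(ltW rp) //.
    rewrite mulr1.
    rewrite [_ / _](_ : _ = - r); first by rewrite normrN ger0_norm // ltW.
    have hD := D_gt0; rewrite /r; move: hD; rewrite /D => hD; field; apply/andP; split; apply/eqP; lra.
  + by apply: le_trans (wB0 _ _ _ _) _; rewrite add0n; apply: H3.
  + by apply: le_trans (wB0 _ _ _ _) _; rewrite addn0; apply: H3.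
  + by apply: le_trans (wB0 _ _ _ _) _; rewrite addSn; apply: H3.
- case: a => [|a]; case: c => [|c].
  + rewrite /vweight !expr0 mul1r; case: b => [|[|b]] /=; rewrite ?normr0 ?ler01 //.
    by rewrite mulr1 divff ?normr1 //; have := D_gt0; rewrite /D => ?; apply/eqP; lra.
  + by apply: le_trans (wB0 _ _ _ _) _; rewrite add0n; apply: H3.
  + by apply: le_trans (wB0 _ _ _ _) _; rewrite addn0; apply: H3.
  + by apply: le_trans (wB0 _ _ _ _) _; rewrite addSn; apply: H3.
Qed.
End V.

Unset Implicit Arguments.
Theorem lemma3p5 (R : realType) (k : nat) (q u : R) :
  0 < q -> q < 1 ->
  let s := Num.sqrt (q^-1) in
  s < u ->
  exists C : R, forall (lam : 'I_k -> nat) (h v : nat -> nat -> nat),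
    is_signature lam -> is_path_config lam h v ->
    `|config_weight s q u lam h v| <= C * ((u - s) / (s * u - 1)) ^+ sig_size lam.
Proof.
move=> q0 q1 s su.
have s1 : 1 < s.
  have hq : 1 < q^-1 by rewrite invf_gt1.
  have e : s ^+ 2 = q^-1 by rewrite sqr_sqrtr // ltW // invr_gt0.
  have s0 : 0 <= s by rewrite sqrtr_ge0.
  rewrite expr2 in e; nra.
have q1' : q <= 1 by apply: ltW.
have Bp := B_ge1 q0 q1' s1 su.
have rp := r_gt0 q0 q1' s1 su.
exists (B s u ^+ (k * (k + k))) => lam h v _ Hp.
rewrite /config_weight normr_prod.
set n := (\max_(i < k) lam i).+1.
apply: le_trans (_ : \prod_(x < n) \prod_(1 <= y < k.+1)
   (B s u ^+ (v x y + v x y.+1) * r s u ^+ (h x.+1 y)) <= _).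
  apply: ler_prod => x _; rewrite normr_ge0 /= normr_prod.
  apply: ler_prod => y _; rewrite normr_ge0 /=; exact: wbound.
under eq_bigr => x _ do rewrite big_split /= !prodrXr.
rewrite big_split /= !prodrXr (hsum_total Hp).
rewrite ler_pM2r ?exprn_gt0 //.
have := vsum_total n Hp; set E := (\sum_(_ < n) _)%N => HE.
rewrite -(subnK HE) exprD ler_peMl ?exprn_ge0 ?exprn_ege1 //; lra.
Qed.
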